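(* Let $\mathfrak{f}=\sum_{\lambda\vdash4}c_\lambda\mathfrak{p}_\lambda$ with real $c_\lambda$. Then $\mathfrak{f}\in\mathfrak{P}_4$ if and only if for every $\alpha\in[0,1]$ the bivariate form $\Phi^\alpha_{\mathfrak{f}}(x,y)=\sum_{\lambda\vdash4}c_\lambda\Phi_\lambda(\alpha,1-\alpha,x,y)$ is nonnegative on $\mathbb{R}^2$.
   Context: $p^{(n)}_i=\frac1n(x_1^i+\dots+x_n^i)$, $p^{(n)}_\lambda=\prod_i p^{(n)}_{\lambda_i}$; $\mathfrak{p}_\lambda$ is the sequence $(p^{(n)}_\lambda)_{n\ge4}$, and $\mathfrak{f}=\sum c_\lambda\mathfrak{p}_\lambda$ is the sequence $(\sum c_\lambda p^{(n)}_\lambda)_{n\ge4}$. $\mathfrak{P}_4$ is the set of such sequences all of whose terms are nonnegative forms. For $\lambda=(\lambda_1,\dots,\lambda_l)\vdash4$, $\Phi_\lambda(s_1,s_2,t_1,t_2)=\prod_{i=1}^l(s_1t_1^{\lambda_i}+s_2t_2^{\lambda_i})$. *)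

(* Defs.v *)
From HB Require Import structures.
From mathcomp Require Import all_boot all_order all_algebra.
From mathcomp Require Import reals.
Set Implicit Arguments. Unset Strict Implicit. Unset Printing Implicit Defensive.
Import Order.TTheory GRing.Theory Num.Theory.
Local Open Scope ring_scope.

Definition partitions4 : seq (seq nat) :=
  [:: [:: 4%N]; [:: 3%N; 1%N]; [:: 2%N; 2%N]; [:: 2%N; 1%N; 1%N];
      [:: 1%N; 1%N; 1%N; 1%N]].

Definition pmean (R : realType) (n i : nat) (x : 'I_n -> R) : R :=
  n%:R^-1 * \sum_(j < n) x j ^+ i.

Definition plam (R : realType) (n : nat) (l : seq nat) (x : 'I_n -> R) : R :=
  \prod_(i <- l) pmean i x.

Definition fterm (R : realType) (c : seq nat -> R) (n : nat) (x : 'I_n -> R) : R :=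
  \sum_(l <- partitions4) c l * plam l x.

Definition inP4 (R : realType) (c : seq nat -> R) : Prop :=
  forall n : nat, (4 <= n)%N -> forall x : 'I_n -> R, 0 <= fterm c x.

Definition Phi (R : realType) (l : seq nat) (s1 s2 t1 t2 : R) : R :=
  \prod_(i <- l) (s1 * t1 ^+ i + s2 * t2 ^+ i).

Definition PhiAlpha (R : realType) (c : seq nat -> R) (a x y : R) : R :=
  \sum_(l <- partitions4) c l * Phi l a (1 - a) x y.

(* Main.v *)
Require Import Defs.
From HB Require Import structures.
From mathcomp Require Import all_boot all_order all_algebra.
From mathcomp Require Import reals.
From mathcomp Require Import ring lra zify.
From mathcomp Require Import polyrcf.
Import Order.TTheory GRing.Theory Num.Theory.
Set Implicit Arguments. Unset Strict Implicit. Unset Printing Implicit Defensive.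
Local Open Scope ring_scope.
Definition G (T : comPzRingType) (c : seq nat -> T) (P : nat -> T) : T :=
  \sum_(l <- partitions4) c l * \prod_(i <- l) P i.

Lemma GE (T : comPzRingType) (c : seq nat -> T) P : G c P =
  c [:: 4%N] * P 4%N + (c [:: 3%N; 1%N] * (P 3%N * P 1%N) + (c [:: 2%N; 2%N] * (P 2%N * P 2%N)
  + (c [:: 2%N; 1%N; 1%N] * (P 2%N * (P 1%N * P 1%N)) + c [:: 1%N; 1%N; 1%N; 1%N] * (P 1%N * (P 1%N * (P 1%N * P 1%N)))))).
Proof. rewrite /G /partitions4 !big_cons !big_nil; ring. Qed.

Lemma G_ext (T : comPzRingType) (c : seq nat -> T) P Q : (forall i, P i = Q i) -> G c P = G c Q.
Proof. by move=> H; rewrite !GE !H. Qed.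

Lemma G_le (R : realType) (c : seq nat -> R) P Q : P 1%N = Q 1%N -> P 2%N = Q 2%N -> P 3%N = Q 3%N ->
  Q 4%N <= P 4%N -> 0 <= c [:: 4%N] -> G c Q <= G c P.
Proof. by rewrite !GE => -> -> -> h hc; rewrite lerD2r ler_wpM2l. Qed.

Lemma small (R : realFieldType) (c4 A B C : R) :
  (forall a, 0 < a <= 1 -> 0 <= c4*a + A*(a*a) + B*(a*(a*a)) + C*(a*(a*(a*a)))) -> 0 <= c4.
Proof.
move=> H; rewrite leNgt; apply/negP => hc.
set M := `|A| + `|B| + `|C|.
have hM : 0 <= M by rewrite /M !addr_ge0.
have hMc : 0 < M - c4 by lra.
set a := - c4 / (2 * (M - c4)).
have ha0 : 0 < a by rewrite /a divr_gt0 // ?mulr_gt0; lra.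
have ha1 : a <= 1 / 2.
  by rewrite /a ler_pdivrMr ?mulr_gt0 //; lra.
have haM : a * M <= - c4 / 2.
  rewrite /a mulrAC ler_pdivrMr ?mulr_gt0 //; nra.
have hA : A * a <= `|A| * a by apply: ler_wpM2r; [exact: ltW | exact: ler_norm].
have hB : B * (a*a) <= `|B| * a.
  apply: (le_trans (ler_wpM2r _ (ler_norm B))); first by rewrite mulr_ge0 // ltW.
  apply: ler_wpM2l => //; nra.
have hC : C * (a*(a*a)) <= `|C| * a.
  apply: (le_trans (ler_wpM2r _ (ler_norm C))); first by nra.
  apply: ler_wpM2l => //; nra.
have := H a; rewrite ha0 /= (le_trans ha1) ?ler_pdivrMr //; last lra.
move=> /(_ isT) h.
have : c4 + A*a + B*(a*a) + C*(a*(a*a)) < 0.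
  rewrite /M in haM; nra.
move=> h2; nra.
Qed.
Lemma pmean_lin (R : realType) n (x : 'I_n -> R) k i :
  k * pmean i x = \sum_(j < n) (k / n%:R) * x j ^+ i.
Proof. by rewrite /pmean mulrA mulr_sumr. Qed.

Lemma const_sum (R : realType) n (hn : (0 < n)%N) (k : R) : k = \sum_(j < n) (k / n%:R).
Proof. by rewrite sumr_const card_ord -[RHS]mulr_natr divfK // pnatr_eq0 -lt0n. Qed.

Lemma poly4 (R : realType) n (hn : (0 < n)%N) (x : 'I_n -> R) k0 k1 k2 k3 k4 :
  n%:R^-1 * \sum_(j < n) (k0 + k1 * x j + k2 * x j ^+ 2 + k3 * x j ^+ 3 + k4 * x j ^+ 4)
  = k0 + k1 * pmean 1 x + k2 * pmean 2 x + k3 * pmean 3 x + k4 * pmean 4 x.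
Proof.
rewrite !pmean_lin [in RHS](const_sum hn k0) -!big_split /= mulr_sumr.
by apply: eq_bigr => j _; rewrite expr1; field; rewrite pnatr_eq0 -lt0n.
Qed.

Lemma Qrec (R : realType) (al a b e g : R) k :
  a ^+ 2 = e * a + g -> b ^+ 2 = e * b + g ->
  al * a ^+ k.+2 + (1 - al) * b ^+ k.+2 =
  e * (al * a ^+ k.+1 + (1 - al) * b ^+ k.+1) + g * (al * a ^+ k + (1 - al) * b ^+ k).
Proof.
move=> ha hb.
have -> : a ^+ k.+2 = a ^+ k * a ^+ 2 by rewrite -exprD addn2.
have -> : b ^+ k.+2 = b ^+ k * b ^+ 2 by rewrite -exprD addn2.
rewrite ha hb !exprS; ring.
Qed.

Lemma two_atom (R : realType) (m1 m2 m3 : R) : 0 < m2 - m1 ^+ 2 ->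
  exists al a b e g, (0 <= al <= 1 /\ al * a + (1 - al) * b = m1) /\ [/\ 
     a ^+ 2 = e * a + g, b ^+ 2 = e * b + g, g = m2 - e * m1 &
     e * (m2 - m1 ^+ 2) = m3 - m1 * m2].
Proof.
move=> hv.
set v := m2 - m1 ^+ 2 in hv *.
set e := (m3 - m1 * m2) / v.
set g := m2 - e * m1.
set d := e - 2 * m1.
set D := Num.sqrt (d ^+ 2 + 4 * v).
have hD2 : D ^+ 2 = d ^+ 2 + 4 * v by rewrite sqr_sqrtr //; nra.
have hD0 : 0 <= D by exact: sqrtr_ge0.
have hDp : 0 < D by nra.
exists ((d + D) / (2 * D)), ((e - D) / 2), ((e + D) / 2), e, g; split; [split|split].
- apply/andP; split.
    by apply: divr_ge0; nra.
  by rewrite ler_pdivrMr; nra.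
- by rewrite /d; field; apply/eqP; nra.
- have -> : ((e - D) / 2) ^+ 2 = (e ^+ 2 - 2 * e * D + D ^+ 2) / 4 by field.
  by rewrite hD2 /d /g /v; field.
- have -> : ((e + D) / 2) ^+ 2 = (e ^+ 2 + 2 * e * D + D ^+ 2) / 4 by field.
  by rewrite hD2 /d /g /v; field.
- by [].
- by rewrite /e divfK //; apply/eqP; nra.
Qed.
Lemma backward (R : realType) (c : seq nat -> R) :
  (forall a : R, 0 <= a <= 1 -> forall x y : R, 0 <= PhiAlpha c a x y) -> inP4 c.
Proof.
move=> H.
have hc4 : 0 <= c [:: 4%N].
  apply: (@small _ _ (c [:: 3%N; 1%N] + c [:: 2%N; 2%N]) (c [:: 2%N; 1%N; 1%N])
     (c [:: 1%N; 1%N; 1%N; 1%N])) => a /andP[ha0 ha1].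
  have := H a _ 1 0; rewrite ltW // ha1 => /(_ isT).
  have -> : PhiAlpha c a 1 0 = G c (fun i => a * 1 ^+ i + (1 - a) * 0 ^+ i) by [].
  rewrite GE !expr1n !expr0n /= !mulr0 !addr0 !mulr1 => h.
  rewrite mulrDl; lra.
move=> n hn x.
have hn0 : (0 < n)%N by apply: leq_trans hn.
have hF : fterm c x = G c (fun i => pmean i x) by [].
set m1 := pmean 1 x; set m2 := pmean 2 x; set m3 := pmean 3 x; set m4 := pmean 4 x.
have hv : m2 - m1 ^+ 2 = n%:R^-1 * \sum_(j < n) (x j - m1) ^+ 2.
  rewrite (eq_bigr (fun j => m1 ^+ 2 + (-2 * m1) * x j + 1 * x j ^+ 2 + 0 * x j ^+ 3 + 0 * x j ^+ 4)); last by move=> j _; ring.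
  by rewrite poly4 // -/m1 -/m2; ring.
have hv0 : 0 <= m2 - m1 ^+ 2.
  rewrite hv mulr_ge0 ?invr_ge0 ?ler0n // sumr_ge0 // => j _; exact: sqr_ge0.
case: (eqVneq (m2 - m1 ^+ 2) 0) => [hz|hnz].
  have hS : \sum_(j < n) (x j - m1) ^+ 2 = 0.
    move/eqP: hv; rewrite hz eq_sym mulf_eq0 invr_eq0 pnatr_eq0 gtn_eqF //= => /eqP //.
  have hxj : forall j, x j = m1.
    move=> j; have := psumr_eq0P (fun j _ => sqr_ge0 (x j - m1)) hS (i := j) isT.
    by move/eqP; rewrite sqrf_eq0 subr_eq0 => /eqP.
  have hpm : forall i, pmean i x = m1 ^+ i.
    move=> i; rewrite /pmean (eq_bigr (fun _ => m1 ^+ i)); last by move=> j _; rewrite hxj.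
    rewrite sumr_const card_ord -[m1 ^+ i *+ n]mulr_natr mulrCA mulVf ?mulr1 //.
    by rewrite pnatr_eq0 gtn_eqF.
  have := H 1 _ m1 0; rewrite ler01 lexx => /(_ isT).
  have -> : PhiAlpha c 1 m1 0 = G c (fun i => 1 * m1 ^+ i + (1 - 1) * 0 ^+ i) by [].
  rewrite hF (@G_ext _ _ _ (fun i => 1 * m1 ^+ i + (1 - 1) * 0 ^+ i)) //.
  by move=> i; rewrite hpm subrr mul0r addr0 mul1r.
have hvp : 0 < m2 - m1 ^+ 2 by rewrite lt_neqAle eq_sym hnz hv0.
have [al [a [b [e [g [[hal hS1] [ha hb hg he]]]]]]] := two_atom m3 hvp.
have := H al hal a b.
have -> : PhiAlpha c al a b = G c (fun i => al * a ^+ i + (1 - al) * b ^+ i) by [].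
move=> h0; apply: le_trans h0 _; rewrite hF.
have hm3 : m3 = e * (m2 - m1 ^+ 2) + m1 * m2 by rewrite he; ring.
have hS2 : al * a ^+ 2 + (1 - al) * b ^+ 2 = m2.
  by rewrite (Qrec _ 0 ha hb) !expr1 !expr0 hS1 hg; ring.
have hS3 : al * a ^+ 3 + (1 - al) * b ^+ 3 = m3.
  by rewrite (Qrec _ 1 ha hb) hS2 !expr1 hS1 hg hm3; ring.
have hS4 : al * a ^+ 4 + (1 - al) * b ^+ 4 = e * m3 + g * m2.
  by rewrite (Qrec _ 2 ha hb) hS2 hS3.
have hq : n%:R^-1 * \sum_(j < n) (x j ^+ 2 - e * x j - g) ^+ 2
    = g ^+ 2 + (2 * e * g) * m1 + (e ^+ 2 - 2 * g) * m2 + (-2 * e) * m3 + 1 * m4.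
  rewrite (eq_bigr (fun j => g ^+ 2 + (2 * e * g) * x j + (e ^+ 2 - 2 * g) * x j ^+ 2
     + (-2 * e) * x j ^+ 3 + 1 * x j ^+ 4)); last by move=> j _; ring.
  by rewrite poly4.
have hq0 : 0 <= n%:R^-1 * \sum_(j < n) (x j ^+ 2 - e * x j - g) ^+ 2.
  rewrite mulr_ge0 ?invr_ge0 ?ler0n // sumr_ge0 // => j _; exact: sqr_ge0.
have key : m4 - (e * m3 + g * m2) = n%:R^-1 * \sum_(j < n) (x j ^+ 2 - e * x j - g) ^+ 2.
  rewrite hq hg hm3; ring.
apply: G_le => //.
rewrite hS4 -/m4; lra.
Qed.
Lemma forward (R : realType) (c : seq nat -> R) :
  inP4 c -> (forall a : R, 0 <= a <= 1 -> forall x y : R, 0 <= PhiAlpha c a x y).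
Proof.
move=> H a /andP[ha0 ha1] x y.
rewrite leNgt; apply/negP => hneg.
pose p : {poly R} := G (fun l => (c l)%:P) (fun i => 'X * (x ^+ i - y ^+ i)%:P + (y ^+ i)%:P).
have hp : forall b, p.[b] = PhiAlpha c b x y.
  move=> b; rewrite /p (_ : PhiAlpha c b x y = G c (fun i => b * x ^+ i + (1 - b) * y ^+ i)) //.
  by rewrite !GE !(hornerD, hornerM, hornerC, hornerX); ring.
have he : 0 < - PhiAlpha c a x y by rewrite oppr_gt0.
have [d hd hcont] := @poly_cont R a p _ he.
have hlt : forall b, `|b - a| < d -> PhiAlpha c b x y < 0.
  move=> b /hcont; rewrite !hp => h.
  have := le_lt_trans (ler_norm _) h; lra.
pose N := (Num.truncn (d^-1)).+4.
have hN : (4 <= N)%N by rewrite /N.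
have hN0 : 0 < N%:R :> R by rewrite ltr0n.
have hNd : 1 < N%:R * d.
  have hdi : 0 <= d^-1 by rewrite invr_ge0 ltW.
  have /andP[_ h2] := truncn_itv hdi.
  have h3 : (Num.truncn d^-1).+1%:R <= N%:R :> R by rewrite ler_nat /N; lia.
  have h4 : d^-1 < N%:R := lt_le_trans h2 h3.
  by rewrite -(ltr_pdivrMr _ _ hd) mul1r.
clearbody N.
pose k := Num.truncn (N%:R * a).
have hNa : 0 <= N%:R * a by rewrite mulr_ge0 // ltW.
have /andP[hk1 hk2] := truncn_itv hNa.
rewrite -natr1 in hk2.
have hkN : (k <= N)%N.
  rewrite -(ler_nat R); apply: (le_trans hk1); nra.
rewrite -/k in hk1 hk2.
clearbody k.
pose be := k%:R / N%:R : R.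
have hbe : be * N%:R = k%:R by rewrite /be divfK // gt_eqF.
have hb : `|be - a| < d.
  rewrite ltr_norml; apply/andP; split.
    have : 0 < (be - a + d) * N%:R by nra.
    by rewrite pmulr_lgt0 // => ?; lra.
  have : (be - a) * N%:R <= 0 by nra.
  rewrite pmulr_lle0 // => ?; lra.
pose xv : 'I_N -> R := fun j => if (j < k)%N then x else y.
have hpm : forall i, pmean i xv = be * x ^+ i + (1 - be) * y ^+ i.
  move=> i; rewrite /pmean.
  have -> : \sum_(j < N) xv j ^+ i = x ^+ i *+ k + y ^+ i *+ (N - k).
    rewrite -(big_mkord xpredT (fun j => (if (j < k)%N then x else y) ^+ i)).
    rewrite (big_cat_nat (n := k)) //=.
    rewrite (eq_big_nat _ _ (F2 := fun _ => x ^+ i)); last by move=> j /andP[_ ->].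
    rewrite [X in _ + X](eq_big_nat _ _ (F2 := fun _ => y ^+ i)); last first.
      by move=> j /andP[hj _]; rewrite ltnNge hj.
    by rewrite !sumr_const_nat subn0.
  rewrite -[x ^+ i *+ k]mulr_natr -[y ^+ i *+ (N - k)]mulr_natr natrB // /be; field; by rewrite gt_eqF.
have := H N hN xv.
have -> : fterm c xv = G c (fun i => pmean i xv) by [].
rewrite (@G_ext _ _ _ (fun i => be * x ^+ i + (1 - be) * y ^+ i)); last exact: hpm.
have := hlt _ hb.
have -> : PhiAlpha c be x y = G c (fun i => be * x ^+ i + (1 - be) * y ^+ i) by [].
lra.
Qed.

Theorem proposition7p1 (R : realType) (c : seq nat -> R) :
  inP4 c <->
  (forall a : R, 0 <= a <= 1 -> forall x y : R, 0 <= PhiAlpha c a x y).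
Proof. split; [exact: forward | exact: backward]. Qed.
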